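(* Let $X,Y$ be strings of length $n$, let $T$ be a partition tree for $X$ and $Y$, and let $L\ge0$ be an integer. Suppose that $T$ has maximum degree $\ell$ and height at most $h$. Then (a) $\mathrm{TD}^L(X,Y)\ge\mathrm{ED}(X,Y)$, and (b) if $\mathrm{ED}(X,Y)\le L$, then $\mathrm{TD}^L(X,Y)\le(2(\ell-1)h+1)\,\mathrm{ED}(X,Y)$.
   Context: $\mathrm{ED}$ is edit distance. For a string $Z$ and integers $i,j$, $Z[i..j)$ denotes $Z[\max(0,i)]\cdots Z[\min(j,|Z|)-1]$ (indices out of range are clipped). A partition tree for length-$n$ strings $X,Y$ is a rooted ordered tree (balanced, each internal node having at most $\ell$ children) with $n$ leaves numbered $0,\dots,n-1$ from left to right; the height is the maximum distance from the root to a leaf. For a node $v$ whose subtree contains exactly the leaves $i,\dots,j-1$, set $X_v=X[i..j)$ and, for a shift $s\in\mathbb Z$, $Y_{v,s}=Y[i+s..j+s)$. For every node $v$ and $s\in\{-L,\dots,L\}$ define recursively: if $v$ is a leaf, $\mathrm{TD}^L_{v,s}(X,Y)=\mathrm{ED}(X_v,Y_{v,s})$; if $v$ has children $v_0,\dots,v_{m-1}$, then $\mathrm{TD}^L_{v,s}(X,Y)=\sum_{i=0}^{m-1}\widetilde{\mathrm{TD}}^L_{v_i,s}(X,Y)$, where $\widetilde{\mathrm{TD}}^L_{w,s}(X,Y)=\min_{s'\in\{-L,\dots,L\}}\big(\mathrm{TD}^L_{w,s'}(X,Y)+2|s-s'|\big)$. Finally $\mathrm{TD}^L(X,Y):=\mathrm{TD}^L_{\mathrm{root},0}(X,Y)$.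 *)

(* Defs.v *)
From mathcomp Require Import all_boot all_order all_algebra.
Set Implicit Arguments. Unset Strict Implicit. Unset Printing Implicit Defensive.
Import Order.TTheory GRing.Theory Num.Theory.

Section ED.
Variable A : eqType.

Fixpoint ed (X Y : seq A) {struct X} : nat :=
  match X with
  | [::] => size Y
  | x :: X' =>
      let fix edx (Y : seq A) : nat :=
        match Y with
        | [::] => (size X').+1
        | y :: Y' => minn (minn (ed X' Y).+1 (edx Y').+1) (ed X' Y' + (x != y))
        end in
      edx Y
  end.

(* Z[a..b) with clipping: Z[max(0,a)] ... Z[min(b,|Z|)-1]. *)
Definition sub (Z : seq A) (a b : int) : seq A :=
  drop `|Num.max 0%R a|%N (take `|Num.max 0%R b|%N Z).
End ED.

(* ---------- Rooted ordered trees; leaves are numbered left to right. *)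
Inductive ptree := PLeaf | PNode of seq ptree.

Fixpoint nleaves (t : ptree) : nat :=
  match t with PLeaf => 1 | PNode ts => sumn (map nleaves ts) end.

Fixpoint height (t : ptree) : nat :=
  match t with PLeaf => 0 | PNode ts => (foldr maxn 0 (map height ts)).+1 end.

Fixpoint maxdeg (t : ptree) : nat :=
  match t with PLeaf => 0 | PNode ts => maxn (size ts) (foldr maxn 0 (map maxdeg ts)) end.

(* well-formed: every internal node has at least one child
   (a childless node is a leaf, represented by PLeaf) *)
Fixpoint ptree_wf (t : ptree) : bool :=
  match t with PLeaf => true | PNode ts => (size ts != 0) && all ptree_wf ts end.

Definition partition_tree (n : nat) (t : ptree) : bool :=
  ptree_wf t && (nleaves t == n).

(* minimum of a nonempty list of naturals (0 on the empty list, never used) *)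
Definition minl (l : seq nat) : nat :=
  match l with [::] => 0 | x :: l' => foldr minn x l' end.

Definition srange (L : nat) : seq int := [seq (k%:Z - L%:Z)%R | k <- iota 0 (L.*2.+1)].

Section TD.
Variables (A : eqType) (L : nat) (X Y : seq A).

(* TD t i s = TD^L_{v,s}(X,Y) for the node v whose subtree is t and whose
   leftmost leaf has number i (so its leaves are i, ..., i + nleaves t - 1). *)
Fixpoint TDnode (t : ptree) (i : nat) (s : int) {struct t} : nat :=
  match t with
  | PLeaf => ed (sub X i (i + 1)%N) (sub Y (i%:Z + s)%R ((i + 1)%N%:Z + s)%R)
  | PNode ts =>
      let fix go (cs : seq ptree) (j : nat) : nat :=
        match cs with
        | [::] => 0
        | c :: cs' =>
            minl [seq TDnode c j s' + 2 * `|(s - s')%R|%N | s' <- srange L]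
            + go cs' (j + nleaves c)
        end in
      go ts i
  end.

Definition TDtilde (t : ptree) (i : nat) (s : int) : nat :=
  minl [seq TDnode t i s' + 2 * `|(s - s')%R|%N | s' <- srange L].

Definition TD (T : ptree) : nat := TDnode T 0 0.
End TD.

(* Main.v *)
Require Import Defs.
From mathcomp Require Import all_boot all_order all_algebra.
From mathcomp Require Import zify.
Import Order.TTheory GRing.Theory Num.Theory.
Set Implicit Arguments. Unset Strict Implicit. Unset Printing Implicit Defensive.

Section EDL.
Variable A : eqType.
Implicit Types X Y Z U V : seq A.

Lemma ed_nil X : ed X [::] = size X.
Proof. by case: X. Qed.
Lemma ed_nill Y : ed [::] Y = size Y.
Proof. by []. Qed.
Lemma ed_cons x X y Y : ed (x::X) (y::Y) =
  minn (minn (ed X (y::Y)).+1 (ed (x::X) Y).+1) (ed X Y + (x != y)).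
Proof. by []. Qed.

Lemma ed_insf X y Z : ed X (y::Z) <= (ed X Z).+1.
Proof. case: X => [|x X] //. rewrite ed_cons; lia. Qed.

Lemma ed_delfx x X Z : ed (x::X) Z <= (ed X Z).+1.
Proof.
elim: Z => [|z Z IH]; first by rewrite !ed_nil.
rewrite ed_cons; lia.
Qed.

Lemma ed_delf X y Z : ed X Z <= (ed X (y::Z)).+1.
Proof.
elim: X Z => [|x X IH] Z; first by rewrite !ed_nill /=; lia.
rewrite ed_cons. have := ed_delfx x X Z. have := IH Z. lia.
Qed.

Lemma ed_size X Y : size Y - size X <= ed X Y /\ size X - size Y <= ed X Y.
Proof.
elim: X Y => [|x X IH] Y; first by rewrite ed_nill /=; split; lia.
elim: Y => [|y Y IHY]; first by rewrite ed_nil /=; split; lia.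
rewrite ed_cons /=. have := IH (y::Y). have := IH Y. move: IHY => /=. split; lia.
Qed.

Lemma ed_catl X1 X2 Y : ed (X1 ++ X2) Y <= size X1 + ed X2 Y.
Proof.
elim: X1 => [|x X1 IH] //. rewrite cat_cons [size _]/=. have := ed_delfx x (X1 ++ X2) Y. lia.
Qed.

Lemma ed_catr X Y1 Y2 : ed X (Y1 ++ Y2) <= size Y1 + ed X Y2.
Proof.
elim: Y1 => [|y Y1 IH] //. rewrite cat_cons [size _]/=. have := ed_insf X y (Y1 ++ Y2). lia.
Qed.

Lemma ed_cat X1 X2 Y1 Y2 : ed (X1 ++ X2) (Y1 ++ Y2) <= ed X1 Y1 + ed X2 Y2.
Proof.
elim: X1 Y1 => [|x X1 IH] Y1; first by rewrite ed_nill ed_catr.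
elim: Y1 => [|y Y1 IHY]; first by rewrite cat0s ed_nil; have := ed_catl (x::X1) X2 Y2; rewrite cat_cons [size (_::_)]/=; lia.
rewrite !cat_cons !ed_cons. have := IH (y::Y1). have := IH Y1. move: IHY. rewrite !cat_cons. lia.
Qed.

Lemma ed_insb X Z y : ed X (Z ++ [:: y]) <= (ed X Z).+1.
Proof. have := ed_cat X [::] Z [:: y]. rewrite cats0 /=. lia. Qed.

Lemma ed_delb X Z y : ed X Z <= (ed X (Z ++ [:: y])).+1.
Proof.
elim: X Z => [|x X IH] Z; first by rewrite !ed_nill size_cat; lia.
elim: Z => [|z Z IHZ].
  rewrite ed_nil /=. have [_ ] := ed_size (x::X) [:: y]. rewrite /=. lia.
rewrite cat_cons !ed_cons. have := IH (z::Z). have := IH Z. move: IHZ. rewrite /=. lia.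
Qed.

End EDL.

Section SEG.
Variable A : eqType.
Implicit Types X Y Z U V : seq A.

Definition seg Y (a b : nat) := drop a (take b Y).

Lemma seg_S Y a b : seg Y a.+1 b = behead (seg Y a b).
Proof. by rewrite /seg -add1n -drop_drop drop1. Qed.

Lemma seg_Sr Y a b : exists v : seq A, size v <= 1 /\ seg Y a b.+1 = seg Y a b ++ v.
Proof.
rewrite /seg (_ : b.+1 = b + 1); last by rewrite addn1.
rewrite takeD drop_cat.
case: ifP => H.
  exists (take 1 (drop b Y)); split => //. by rewrite size_take_min; lia.
rewrite (@drop_oversize _ a (take b Y)); last by lia.
exists (drop (a - size (take b Y)) (take 1 (drop b Y))); split => //.
rewrite size_drop size_take_min; lia.
Qed.

Lemma ed_behead X u : ed X (behead u) <= (ed X u).+1 /\ ed X u <= (ed X (behead u)).+1.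
Proof. case: u => [|y u] /=; first by lia. split; [exact: ed_delf | exact: ed_insf]. Qed.

Lemma ed_app1 X u v : size v <= 1 -> ed X (u ++ v) <= (ed X u).+1 /\ ed X u <= (ed X (u ++ v)).+1.
Proof.
case: v => [|y [|z v]] //= _; first by rewrite cats0; lia.
split; [exact: ed_insb | exact: ed_delb].
Qed.

Lemma seg_step X Y a b a' b' : (a' = a \/ a' = a.+1) -> (b' = b \/ b' = b.+1) ->
  ed X (seg Y a b) <= ed X (seg Y a' b') + 2 /\ ed X (seg Y a' b') <= ed X (seg Y a b) + 2.
Proof.
have H1 : forall a b, ed X (seg Y a b) <= ed X (seg Y a b.+1) + 1 /\ ed X (seg Y a b.+1) <= ed X (seg Y a b) + 1.
  move=> c d; have [v [Hv ->]] := seg_Sr Y c d; have := ed_app1 X (seg Y c d) Hv; lia.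
have H2 : forall a b, ed X (seg Y a b) <= ed X (seg Y a.+1 b) + 1 /\ ed X (seg Y a.+1 b) <= ed X (seg Y a b) + 1.
  move=> c d; rewrite seg_S; have := ed_behead X (seg Y c d); lia.
move=> [->|->] [->|->].
- lia.
- have := H1 a b; lia.
- have := H2 a b; lia.
- have := H1 a b; have := H2 a b.+1; lia.
Qed.

Lemma sub_seg Y (l r : int) : sub Y l r = seg Y `|Num.max 0%R l| `|Num.max 0%R r|.
Proof. by []. Qed.

Lemma shift1 X Y (a b s : int) :
  ed X (sub Y (a + s) (b + s)) <= ed X (sub Y (a + (s + 1)) (b + (s + 1))) + 2 /\
  ed X (sub Y (a + (s + 1)) (b + (s + 1))) <= ed X (sub Y (a + s) (b + s)) + 2.
Proof.
rewrite !sub_seg; apply: seg_step; lia.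
Qed.

Lemma shiftk X Y (a b s : int) (k : nat) :
  ed X (sub Y (a + s) (b + s)) <= ed X (sub Y (a + (s + k%:Z)) (b + (s + k%:Z))) + 2 * k /\
  ed X (sub Y (a + (s + k%:Z)) (b + (s + k%:Z))) <= ed X (sub Y (a + s) (b + s)) + 2 * k.
Proof.
elim: k => [|k IH]; first by rewrite GRing.addr0; lia.
have E : (s + k.+1%:Z = (s + k%:Z) + 1)%R by lia.
rewrite E. have := shift1 X Y a b (s + k%:Z). lia.
Qed.

Lemma shift X Y (a b s s' : int) :
  ed X (sub Y (a + s) (b + s)) <= ed X (sub Y (a + s') (b + s')) + 2 * `|(s - s')%R|%N.
Proof.
case: (lerP s s') => H.
  set k := `|(s' - s)%R|%N.
  have E : s' = (s + k%:Z)%R by rewrite /k; lia.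
  have Ek : `|(s - s')%R|%N = k by rewrite /k; lia.
  rewrite Ek E; have := shiftk X Y a b s k; lia.
set k := `|(s - s')%R|%N.
have E : s = (s' + k%:Z)%R by rewrite /k; lia.
rewrite {1 2}E; have := shiftk X Y a b s' k; lia.
Qed.

Lemma seg_cat Y a b c : a <= b -> b <= c -> seg Y a b ++ seg Y b c = seg Y a c.
Proof.
move=> hab hbc.
have K : forall a b, a <= b -> seg Y a b = take (b - a) (drop a Y).
  by move=> x y h; rewrite take_drop subnK.
rewrite !K //; last by lia.
have -> : c - a = (b - a) + (c - b) by lia.
by rewrite takeD drop_drop subnK.
Qed.

Lemma sub_cat Y (l m r : int) : (l <= m)%R -> (m <= r)%R -> sub Y l m ++ sub Y m r = sub Y l r.
Proof. move=> h1 h2; rewrite !sub_seg seg_cat //; lia. Qed.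

End SEG.

Lemma minl_aux (l : seq nat) x : foldr minn x l <= x /\ (forall z, z \in l -> foldr minn x l <= z).
Proof.
elim: l => [|y l [IH1 IH2]] /=; first by split.
split; first by lia.
move=> z; rewrite inE => /orP [/eqP ->|/IH2]; lia.
Qed.

Lemma minl_le (l : seq nat) x : x \in l -> minl l <= x.
Proof.
case: l => [|y l] //=; rewrite inE => /orP [/eqP ->|H]; have [H1 H2] := minl_aux l y.
  done.
exact: H2.
Qed.

Lemma minl_mem (l : seq nat) : l != [::] -> minl l \in l.
Proof.
case: l => [|y l] //= _.
elim: l => [|z l IH] /=; first by rewrite inE.
move: IH; rewrite !inE /minn; case: ifP => _; first by rewrite eqxx orbT.
by case/orP => ->; rewrite ?orbT.
Qed.

Lemma srange_mem L (d : int) : (`|d| <= L)%N -> d \in srange L.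
Proof.
move=> H; apply/mapP; exists `|(d + L%:Z)%R|%N; first by rewrite mem_iota; lia.
lia.
Qed.

Lemma srange_nil L : srange L != [::].
Proof. by []. Qed.

Section TDL.
Variables (A : eqType) (L : nat) (X Y : seq A).

Lemma TD_cons c cs i s : TDnode L X Y (PNode (c::cs)) i s =
  TDtilde L X Y c i s + TDnode L X Y (PNode cs) (i + nleaves c) s.
Proof. by []. Qed.

Lemma TD_nil i s : TDnode L X Y (PNode [::]) i s = 0.
Proof. by []. Qed.

Lemma sub_nil (Z : seq A) (l : int) : sub Z l l = [::].
Proof. rewrite sub_seg /seg drop_oversize // size_take_min; lia. Qed.

Lemma TD_ge h : forall t (i : nat) (s : int), height t <= h ->
  ed (sub X i (i + nleaves t)%N) (sub Y (i%:Z + s)%R ((i + nleaves t)%N%:Z + s)%R)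
  <= TDnode L X Y t i s.
Proof.
elim: h => [|h IH] [|ts] i s //.
elim: ts i => [|c cs IHl] i Hh.
  by rewrite TD_nil (_ : nleaves (PNode [::]) = 0) // !addn0 !sub_nil.
have Hc : height c <= h by move: Hh => /=; lia.
have Hcs : height (PNode cs) <= h.+1 by move: Hh => /=; lia.
rewrite TD_cons.
have -> : nleaves (PNode (c :: cs)) = nleaves c + nleaves (PNode cs) by [].
set m := nleaves c; set M := nleaves (PNode cs).
rewrite -(@sub_cat _ X i%:Z (i + m)%N%:Z); try lia.
rewrite -(@sub_cat _ Y (i%:Z + s)%R ((i + m)%N%:Z + s)%R); try lia.
apply: leq_trans (ed_cat _ _ _ _) _.
apply: leq_add; last first.
  have := IHl (i + m) Hcs. by rewrite addnA.
rewrite /TDtilde.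
have Hne : [seq TDnode L X Y c i s' + 2 * `|(s - s')%R|%N | s' <- srange L] != [::] by [].
have /mapP [s' Hs' ->] := minl_mem Hne.
apply: leq_trans (shift _ _ _ _ _ s') _.
rewrite leq_add2r. exact: IH.
Qed.
End TDL.

Section DEC.
Variable A : eqType.
Implicit Types X Y Z U V : seq A.

Definition wt X (P : seq (seq A)) k := ed (drop k (take k.+1 X)) (nth [::] P k).

Lemma sum_cons (x : A) X q (P : seq (seq A)) :
  \sum_(0 <= k < size (x :: X)) wt (x :: X) (q :: P) k =
  ed [:: x] q + \sum_(0 <= k < size X) wt X P k.
Proof.
rewrite (_ : size (x :: X) = (size X).+1) // big_nat_recl //.
congr (_ + _). by rewrite /wt drop0 take_cons take0.
Qed.

Lemma ed11 (x y : A) : ed [:: x] [:: y] <= (x != y).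
Proof. rewrite ed_cons /=; lia. Qed.

Lemma ed_decomp X Y : 0 < size X -> exists P : seq (seq A),
  [/\ size P = size X, flatten P = Y & \sum_(0 <= k < size X) wt X P k <= ed X Y].
Proof.
elim: X Y => [//|x X IH] Y _.
case: X IH => [|x' X'] IH.
  exists [:: Y]; split => //; first by rewrite /= cats0.
  by rewrite (_ : size [:: x] = 1) // big_nat1 /wt drop0 take_cons take0.
set X := x' :: X'.
have IHX : forall Y, exists P : seq (seq A),
  [/\ size P = size X, flatten P = Y & \sum_(0 <= k < size X) wt X P k <= ed X Y]
  by move=> Z; exact: IH.
elim: Y => [|y Y IHY].
  exists (nseq (size X).+1 [::]); split.
  - by rewrite size_nseq.
  - by elim: (size X).+1 => //.
  - rewrite ed_nil.
    have Hb : forall k, wt (x :: X) (nseq (size X).+1 [::]) k <= 1.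
      by move=> k; rewrite /wt nth_nseq if_same ed_nil size_drop size_take_min; lia.
    apply: (@leq_trans (\sum_(0 <= k < size (x :: X)) 1)).
      by apply: leq_sum => k _; exact: Hb.
    by rewrite sum_nat_const_nat muln1 subn0.
have [P1 [s1 f1 e1]] := IHX (y :: Y).
have [P3 [s3 f3 e3]] := IHX Y.
case: IHY => P2 [s2 f2 e2].
case: P2 s2 f2 e2 => [//|p0 P2] s2 f2 e2.
have H1 : \sum_(0 <= k < size (x :: X)) wt (x :: X) ([::] :: P1) k <= (ed X (y :: Y)).+1.
  rewrite sum_cons (_ : ed [:: x] [::] = 1) //; lia.
have H2 : \sum_(0 <= k < size (x :: X)) wt (x :: X) ((y :: p0) :: P2) k <= (ed (x :: X) Y).+1.
  move: e2. rewrite !sum_cons. have := ed_insf [:: x] y p0. lia.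
have H3 : \sum_(0 <= k < size (x :: X)) wt (x :: X) ([:: y] :: P3) k <= ed X Y + (x != y).
  rewrite sum_cons addnC. apply: leq_add => //. exact: ed11.
rewrite ed_cons.
set a := (ed X (y :: Y)).+1; set b := (ed (x :: X) Y).+1; set c := ed X Y + (x != y).
have : minn (minn a b) c = a \/ minn (minn a b) c = b \/ minn (minn a b) c = c by lia.
case=> [->|[->|->]].
- exists ([::] :: P1); split => //=; by rewrite s1.
- exists ((y :: p0) :: P2); split => //=; by rewrite -f2.
- exists ([:: y] :: P3); split => //=; by rewrite ?s3 ?f3.
Qed.
End DEC.

Lemma ed1_take (A : eqType) (x : A) (p r : seq A) : ed [:: x] (take 1 (p ++ r)) <= ed [:: x] p.
Proof.
case: p => [|y p].
  rewrite cat0s. case: r => [|z r]; first by [].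
  rewrite take_cons take0. have := ed11 x z. rewrite (_ : ed [:: x] [::] = 1) //. lia.
rewrite cat_cons take_cons take0. have := ed11 x y. rewrite [ed [:: x] (y :: p)]ed_cons ed_nill. lia.
Qed.

Section MAIN.
Variables (A : eqType) (L : nat) (X Y : seq A) (P : seq (seq A)).
Hypotheses (HP : size P = size X) (HY : flatten P = Y).

Definition Acut k := size (flatten (take k P)).
Definition del k : int := ((Acut k)%:Z - k%:Z)%R.
Definition cost i j := \sum_(i <= k < j) wt X P k.

Lemma cost_cat i j k : i <= j -> j <= k -> cost i j + cost j k = cost i k.
Proof. by move=> h1 h2; rewrite /cost -big_cat_nat. Qed.

Lemma del0 : del 0 = 0%R.
Proof. by rewrite /del /Acut take0. Qed.

Lemma size_single k : k < size X -> size (drop k (take k.+1 X)) = 1.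
Proof. move=> h; rewrite size_drop size_take_min; lia. Qed.

Lemma delS k : k < size X -> (`|(del k.+1 - del k)%R| <= wt X P k)%N.
Proof.
move=> hk.
have E : Acut k.+1 = Acut k + size (nth [::] P k).
  by rewrite /Acut (take_nth [::]) ?HP // flatten_rcons size_cat.
have [h1 h2] := ed_size (drop k (take k.+1 X)) (nth [::] P k).
move: h1 h2; rewrite size_single // /wt /del E. lia.
Qed.

Lemma del_cost i j : i <= j -> j <= size X -> (`|(del j - del i)%R| <= cost i j)%N.
Proof.
elim: j => [|j IH] hij hj.
  have -> : i = 0 by lia. by rewrite subrr.
case: (ltnP j i) => h.
  have -> : i = j.+1 by lia. by rewrite subrr.
rewrite /cost big_nat_recr //= -/(cost i j).
have := IH h (ltnW hj). have := delS hj. lia.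
Qed.

Lemma leaf_le k : k < size X ->
  ed (sub X k (k + 1)) (sub Y (k%:Z + del k)%R ((k + 1)%N%:Z + del k)%R) <= wt X P k.
Proof.
move=> hk.
rewrite !sub_seg.
have -> : `|Num.max 0%R (k%:Z + 1%:Z)%R|%N = k.+1 by lia.
have -> : `|Num.max 0%R (k%:Z)%R|%N = k by lia.
have -> : `|Num.max 0%R (k%:Z + del k)%R|%N = Acut k by rewrite /del; lia.
have -> : `|Num.max 0%R ((k + 1)%N%:Z + del k)%R|%N = Acut k + 1 by rewrite /del; lia.
have EY : Y = flatten (take k P) ++ (nth [::] P k ++ flatten (drop k.+1 P)).
  by rewrite -HY -{1}(cat_take_drop k P) flatten_cat (drop_nth [::]) ?HP.
rewrite /seg /wt EY /Acut takeD take_size_cat // drop_size_cat // drop_size_cat //.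
have := size_single hk.
case: (drop k (take k.+1 X)) => [|x [|]] //= _.
exact: ed1_take.
Qed.

Hypothesis HL : cost 0 (size X) <= L.

Lemma Hsr j : j <= size X -> del j \in srange L.
Proof.
move=> hj; apply: srange_mem.
have := del_cost (leq0n j) hj. rewrite del0.
have := cost_cat (leq0n j) hj. lia.
Qed.

Lemma tilde_le c j s' s : s' \in srange L ->
  TDtilde L X Y c j s <= TDnode L X Y c j s' + 2 * `|(s - s')%R|%N.
Proof.
move=> hs. apply: minl_le. by apply: (map_f (fun s' => TDnode L X Y c j s' + 2 * `|(s - s')%R|%N)).
Qed.

Section FOREST.
Variables (K h : nat).
Hypothesis IH : forall t i, height t <= h -> maxdeg t <= K -> i + nleaves t <= size X ->
  TDnode L X Y t i (del i) <= (2 * K.-1 * h + 1) * cost i (i + nleaves t).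

Lemma forest cs : forall j i0, i0 <= j -> height (PNode cs) <= h.+1 ->
  maxdeg (PNode cs) <= K -> j + nleaves (PNode cs) <= size X ->
  TDnode L X Y (PNode cs) j (del i0) <=
  (2 * K.-1 * h + 1) * cost j (j + nleaves (PNode cs)) + 2 * size cs * cost i0 (j + nleaves (PNode cs)).
Proof.
elim: cs => [|c cs IHc] j i0 hij hh hd hn; first by rewrite TD_nil.
rewrite TD_cons.
have -> : nleaves (PNode (c :: cs)) = nleaves c + nleaves (PNode cs) by [].
move: hn; have -> : nleaves (PNode (c :: cs)) = nleaves c + nleaves (PNode cs) by [].
move=> hn.
set m := nleaves c; set M := nleaves (PNode cs).
have hc : height c <= h by move: hh => /=; lia.
have hcs : height (PNode cs) <= h.+1 by move: hh => /=; lia.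
have dc : maxdeg c <= K by move: hd => /=; lia.
have dcs : maxdeg (PNode cs) <= K by move: hd => /=; lia.
have T1 := tilde_le c j (del i0) (Hsr (j := j) ltac:(lia)).
have T2 := @IH c j hc dc ltac:(rewrite -/m; lia).
have T3 := del_cost hij ltac:(lia).
have T4 := IHc (j + m) i0 ltac:(lia) hcs dcs ltac:(lia).
rewrite -!addnA in T4.
have C1 := cost_cat (leq_addr m j) (leq_addr M (j + m)).
have C2 := cost_cat hij (leq_addr (m + M) j).
rewrite -addnA in C1.
move: T1 T2 T3 T4 C1 C2.
set a := cost j (j + m); set b := cost (j + m) (j + (m + M)); set e := cost i0 (j + (m + M)).
set c0 := cost i0 j; set ab := cost j (j + (m + M)).
set C := 2 * K.-1 * h + 1.
rewrite /=. nia.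
Qed.
End FOREST.

Lemma TD_le K h : forall t i, height t <= h -> maxdeg t <= K -> i + nleaves t <= size X ->
  TDnode L X Y t i (del i) <= (2 * K.-1 * h + 1) * cost i (i + nleaves t).
Proof.
elim: h => [|h IH] [|ts] i hh hd hn //.
- rewrite /cost (_ : i + nleaves PLeaf = i.+1) ?addn1 // big_nat1. apply: leq_trans (leaf_le _) _; first by move: hn => /=; lia.
  by rewrite leq_pmull.
- rewrite /cost (_ : i + nleaves PLeaf = i.+1) ?addn1 // big_nat1. apply: leq_trans (leaf_le _) _; first by move: hn => /=; lia.
  by rewrite leq_pmull.
case: ts hh hd hn => [|c cs] hh hd hn; first by rewrite TD_nil.
rewrite TD_cons.
move: hn; have -> : nleaves (PNode (c :: cs)) = nleaves c + nleaves (PNode cs) by [].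
move=> hn.
set m := nleaves c; set M := nleaves (PNode cs).
have hc : height c <= h by move: hh => /=; lia.
have hcs : height (PNode cs) <= h.+1 by move: hh => /=; lia.
have dc : maxdeg c <= K by move: hd => /=; lia.
have dcs : maxdeg (PNode cs) <= K by move: hd => /=; lia.
have sz : size cs <= K.-1 by move: hd => /=; lia.
have T1 := tilde_le c i (del i) (Hsr (j := i) ltac:(lia)).
rewrite subrr /= muln0 addn0 in T1.
have T2 := IH c i hc dc ltac:(rewrite -/m; lia).
have T4 := forest IH (cs := cs) (j := i + m) (i0 := i) ltac:(lia) hcs dcs ltac:(lia).
rewrite -!addnA in T4.
have C1 := cost_cat (leq_addr m i) (leq_addr M (i + m)).
rewrite -addnA in C1.
move: T1 T2 T4 C1 sz.
set a := cost i (i + m); set b := cost (i + m) (i + (m + M)); set e := cost i (i + (m + M)).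
set k := K.-1. set s := size cs. nia.
Qed.
End MAIN.

Lemma wf_pos h : forall t, height t <= h -> ptree_wf t -> 0 < nleaves t.
Proof.
elim: h => [|h IH] [|[|c cs]] //= hh /andP [wc _].
have := IH c ltac:(lia) wc. lia.
Qed.

Unset Implicit Arguments.
Set Strict Implicit.

Theorem lemma4p3 (A : eqType) (X Y : seq A) (n : nat) (T : ptree) (L l h : nat) :
  size X = n -> size Y = n -> partition_tree n T ->
  maxdeg T = l -> height T <= h ->
  ed X Y <= TD L X Y T /\
  (ed X Y <= L -> TD L X Y T <= (2 * l.-1 * h + 1) * ed X Y).
Proof.
move=> hX hY /andP [wf /eqP hn] hd hh.
have npos : 0 < n by rewrite -hn; exact: (wf_pos (leqnn _) wf).
split.
  have := @TD_ge A L X Y (height T) T 0 0 (leqnn _).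
  rewrite /TD hn !sub_seg.
  have -> : `|Num.max 0%R (Posz 0)|%N = 0 by [].
  have -> : `|Num.max 0%R (Posz (0 + n)%N)|%N = size X by lia.
  have -> : `|Num.max 0%R (Posz (0 + n)%N + 0)%R|%N = size Y by lia.
  by rewrite /seg !drop0 !take_size.
move=> hL.
have [P [sP fP eP]] := ed_decomp Y (ltac:(lia) : 0 < size X).
have HL : cost X P 0 (size X) <= L by rewrite /cost; lia.
have := TD_le sP fP HL (K := l) (h := h) (t := T) (i := 0) hh ltac:(lia) ltac:(lia).
rewrite /TD del0 hn -hX.
move=> H; apply: leq_trans H _.
apply: leq_mul => //.
Qed.
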